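(* For any single-elimination tournament $\mathcal{T}$ and any two distinct players $a,b$, there exists a unique match $x$ of $\mathcal{T}$ which has in-neighbours $u_a,u_b\in N^-(x)$ satisfying $P(u_a)\cap\{a,b\}=\{a\}$ and $P(u_b)\cap\{a,b\}=\{b\}$.
   Context: A single-elimination tournament is a finite directed graph $\mathcal{T}$ such that: (a) $\mathcal{T}$ has exactly one sink (vertex with no out-neighbours); (b) every non-sink vertex has exactly one out-neighbour; (c) $\mathcal{T}$ has no directed cycles; (d) $|N^-(v)|\ne 1$ for every vertex $v$, where $N^-(v)$ denotes the set of in-neighbours of $v$. The players are the sources (vertices with no in-neighbours) and the matches are the non-source vertices. For a vertex $u$, $P(u)$ is the set of players $a$ for which there is a directed walk from $a$ to $u$ (a sequence $(u_1,\dots,u_t)$, $t\ge1$, $u_1=a$, $u_t=u$, each $u_{i+1}$ an out-neighbour of $u_i$). *)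

(* Defs.v *)
(* A finite directed graph is a finType T with an edge relation
   e : rel T (e u v means there is an arc u -> v). *)
From mathcomp Require Import all_boot.
Set Implicit Arguments. Unset Strict Implicit. Unset Printing Implicit Defensive.

Section Tournament.
Variables (T : finType) (e : rel T).

Definition Nout (v : T) : {set T} := [set w | e v w].
Definition Nin (v : T) : {set T} := [set u | e u v].

Definition is_sink (v : T) : bool := Nout v == set0.
Definition is_source (v : T) : bool := Nin v == set0.

Definition player (v : T) : bool := is_source v.
Definition match_ (v : T) : bool := ~~ is_source v.

(* a directed walk (u_1,...,u_t), t >= 1, from a to u exists iff connect e a u
   (reflexive-transitive closure of e) *)
Definition P (u : T) : {set T} := [set a | player a && connect e a u].

(* directed cycle: an arc u -> v with a directed walk back from v to u *)
Definition acyclic : Prop := forall u v : T, e u v -> ~~ connect e v u.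

Definition single_elim_tournament : Prop :=
  [/\ #|[set v | is_sink v]| = 1,
      (forall v, ~~ is_sink v -> #|Nout v| = 1),
      acyclic
    & (forall v, #|Nin v| != 1)].

End Tournament.

(* Main.v *)
Require Import Defs.
From mathcomp Require Import all_boot.
Set Implicit Arguments. Unset Strict Implicit.

Section Aux.
Variables (T : finType) (e : rel T).
Hypothesis Hfun : forall u v w, e u v -> e u w -> v = w.
Hypothesis Hac : acyclic e.

Lemma first_step u v : connect e u v -> u != v -> exists y, e u y /\ connect e y v.
Proof.
move=> /connectP [[|y p] /= Hp ->]; first by rewrite eqxx.
move=> _; case/andP: Hp => Huy Hp; exists y; split => //.
by apply/connectP; exists p.
Qed.

Lemma last_step u v : connect e u v -> u != v -> exists z, connect e u z /\ e z v.
Proof.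
move=> /connectP [p Hp ->]; case/lastP: p Hp => [|p y]; first by rewrite /= eqxx.
rewrite rcons_path last_rcons => /andP [Hp Hl] _.
exists (last u p); split => //; by apply/connectP; exists p.
Qed.

Lemma strict_no_back u v : connect e u v -> u != v -> ~~ connect e v u.
Proof.
move=> Huv Hne; case: (first_step Huv Hne) => y [Hy Hyv].
apply/negP => Hvu; move: (Hac Hy); by rewrite (connect_trans Hyv Hvu).
Qed.

Lemma chain a u v : connect e a u -> connect e a v -> connect e u v || connect e v u.
Proof.
move=> /connectP [p Hp ->]; elim: p a Hp => [|y p IH] a /=.
  by move=> _ Hav; rewrite Hav.
case/andP=> Hay Hp Hav.
have [Eav|Hne] := eqVneq a v.
  by rewrite -Eav orbC (connect_trans (connect1 Hay)) //; apply/connectP; exists p.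
case: (first_step Hav Hne) => y' [Hay' Hy'v].
rewrite -(Hfun Hay Hay') in Hy'v; exact: IH.
Qed.

Definition reach v := [set w | connect e v w].

Lemma reach_lt u v : connect e u v -> u != v -> #|reach v| < #|reach u|.
Proof.
move=> Huv Hne; apply: proper_card; apply/properP; split.
  apply/subsetP => w; rewrite !inE; exact: connect_trans.
exists u; rewrite !inE ?connect0 //; exact: strict_no_back.
Qed.

Lemma reach_sink v : exists s, is_sink e s && connect e v s.
Proof.
case: (@arg_minnP T v [pred w | connect e v w] (fun w => #|reach w|) (connect0 _ _)).
move=> s /= Hvs Hmin; exists s; rewrite Hvs andbT.
apply/negPn/negP => Hns.
have: Nout e s != set0 by [].
case/set0Pn => w; rewrite inE => Hsw.
have Hne : s != w by apply/eqP => Esw; move: (Hac Hsw); rewrite Esw connect0.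
have := Hmin w (connect_trans Hvs (connect1 Hsw)).
by rewrite leqNgt (reach_lt (connect1 Hsw) Hne).
Qed.

End Aux.

Theorem lemma4p2 (T : finType) (e : rel T) :
  single_elim_tournament e ->
  forall a b : T, player e a -> player e b -> a != b ->
  exists! x : T, match_ e x /\
    exists ua ub : T, [/\ ua \in Nin e x, ub \in Nin e x,
      P e ua :&: [set a; b] = [set a] & P e ub :&: [set a; b] = [set b]].
Proof.
case=> Hsink Hout Hac _ a b Pa Pb Hab.
have Hfun : forall u v w, e u v -> e u w -> v = w.
  move=> u v w Huv Huw.
  have Hns : ~~ is_sink e u by apply/set0Pn; exists v; rewrite inE.
  move/eqP: (Hout u Hns) => /cards1P [z Hz].
  have : v \in Nout e u by rewrite inE.
  have : w \in Nout e u by rewrite inE.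
  by rewrite Hz !inE => /eqP -> /eqP ->.
have Hsrc : forall p u, player e p -> connect e u p -> u = p.
  move=> p u Pp Hup; apply/eqP/negPn/negP => Hne.
  case: (last_step Hup Hne) => z [_ Hzp].
  by move: Pp; rewrite /player /is_source => /eqP/setP/(_ z); rewrite !inE Hzp.
have [r Hr] : exists r, [set v | is_sink e v] = [set r] by apply/cards1P/eqP.
have Hcommon : exists c, connect e a c && connect e b c.
  case: (reach_sink Hac a) => sa /andP [Sa Ha].
  case: (reach_sink Hac b) => sb /andP [Sb Hb].
  have : sa \in [set v | is_sink e v] by rewrite inE.
  have : sb \in [set v | is_sink e v] by rewrite inE.
  rewrite Hr !inE => /eqP Eb /eqP Ea.
  by exists sa; rewrite Ha Ea -Eb Hb.
case: Hcommon => c0 Hc0.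
set C := [pred v | connect e a v && connect e b v].
case: (@arg_maxnP T c0 C (fun w => #|reach e w|) Hc0) => x /andP [Hax Hbx] Hmax.
have Hfirst : forall y, C y -> connect e x y.
  move=> y Cy; case/andP: (Cy) => Hay _.
  case/orP: (chain Hfun Hax Hay) => // Hyx.
  have [->|Hne] := eqVneq y x; first exact: connect0.
  by have := Hmax y Cy; rewrite /= leqNgt (reach_lt Hac Hyx Hne).
have Hxa : a != x.
  by apply/eqP => Eax; move: Hab; rewrite (Hsrc a b Pa) ?eqxx // Eax.
have Hxb : b != x.
  by apply/eqP => Ebx; move: Hab; rewrite (Hsrc b a Pb) ?eqxx // Ebx.
case: (last_step Hax Hxa) => ua [Haua Huax].
case: (last_step Hbx Hxb) => ub [Hbub Hubx].
exists x; split.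
  split; first by apply/set0Pn; exists ua; rewrite inE.
  exists ua, ub; split; rewrite ?inE //.
  - apply/setP => w; rewrite !inE; case: (eqVneq w a) => [->|Hwa] /=.
      by rewrite Pa Haua.
    case: (eqVneq w b) => [->|Hwb]; last by rewrite andbF.
    rewrite andbT Pb /=.
    apply/negP => Hbua.
    have : connect e x ua by apply: Hfirst; rewrite /C /= Haua Hbua.
    by move/negP: (Hac _ _ Huax).
  - apply/setP => w; rewrite !inE; case: (eqVneq w b) => [->|Hwb] /=.
      by rewrite Pb Hbub orbT.
    rewrite orbF.
    case: (eqVneq w a) => [->|Hwa]; last by rewrite andbF.
    rewrite andbT Pa /=.
    apply/negP => Haub.
    have : connect e x ub by apply: Hfirst; rewrite /C /= Haub Hbub.
    by move/negP: (Hac _ _ Hubx).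
move=> x' [_ [ua' [ub' [Hua' Hub' Hpa Hpb]]]].
rewrite inE in Hua'; rewrite inE in Hub'.
have Ha' : connect e a ua'.
  by move/setP: Hpa => /(_ a); rewrite !inE eqxx andbT /= => /andP [].
have Hbb' : connect e b ub'.
  by move/setP: Hpb => /(_ b); rewrite !inE eqxx orbT andbT /= => /andP [].
have Hb' : ~~ connect e b ua'.
  move/setP: Hpa => /(_ b); rewrite !inE eqxx orbT /= eq_sym (negbTE Hab) Pb andbT /=.
  by move=> ->.
have Hxx' : connect e x x'.
  by apply: Hfirst; rewrite /C /= (connect_trans Ha' (connect1 Hua')) (connect_trans Hbb' (connect1 Hub')).
apply/eqP/negPn/negP => Hne.
case/orP: (chain Hfun Hax Ha') => Hc.
  by move/negP: Hb'; apply; apply: connect_trans Hbx Hc.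
have [Eu|Hne2] := eqVneq ua' x.
  by move/negP: Hb'; rewrite Eu.
case: (first_step Hc Hne2) => y [Hy Hyx].
rewrite (Hfun _ _ _ Hy Hua') in Hyx.
by move/negP: (strict_no_back Hac Hxx' Hne); apply.
Qed.
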